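(* There exists an absolute constant $C>0$ such that the following holds. Let $d\ge 1$ and let $H=(V,E)$ be a finite $d$-uniform hypergraph with $|E|\ge 1$, one (unknown) edge $e\in E$ of which is defective. Then there is an adaptive group testing algorithm that identifies $e$, for every possible choice of $e\in E$, using at most $$\log_2|E|+2\sqrt{d\log_2|E|}+C\,d$$ tests. In particular, if $d\ge \log_2|E|$ the number of tests is $O(d)$, and if $d=o(\log_2|E|)$ it is $\log_2|E|(1+o(1))$.
   Context: Group testing on a hypergraph: $H=(V,E)$ is a finite hypergraph (each edge is a subset of the finite vertex set $V$); $H$ is $d$-uniform if every edge has exactly $d$ vertices. Exactly one edge $e\in E$ is defective and unknown. A test is an arbitrary subset $S\subseteq V$; its outcome is positive if $S\cap e\neq\emptyset$ and negative otherwise. An adaptive algorithm may choose each test depending on the outcomes of all previous tests. The algorithm must output $e$ correctly for every $e\in E$; its number of tests is the worst case over $e\in E$. *)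

(* Defs.v *)
From mathcomp Require Import all_boot.
From Stdlib Require Import Reals.
Set Implicit Arguments. Unset Strict Implicit. Unset Printing Implicit Defensive.

(* An adaptive group testing algorithm on vertex set V, as a binary decision
   tree: an internal node performs the test S and continues in the first
   subtree if the outcome is positive and in the second if it is negative;
   a leaf outputs an edge (a subset of V). *)
Inductive gt_tree (V : finType) : Type :=
  | GTLeaf : {set V} -> gt_tree V
  | GTNode : {set V} -> gt_tree V -> gt_tree V -> gt_tree V.

Definition test_outcome (V : finType) (S e : {set V}) : bool := S :&: e != set0.

Fixpoint gt_output (V : finType) (t : gt_tree V) (e : {set V}) : {set V} :=
  match t with
  | GTLeaf o => o
  | GTNode T tp tn => if test_outcome T e then gt_output tp e else gt_output tn e
  end.

Fixpoint gt_ntests (V : finType) (t : gt_tree V) (e : {set V}) : nat :=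
  match t with
  | GTLeaf _ => 0
  | GTNode T tp tn =>
      (if test_outcome T e then gt_ntests tp e else gt_ntests tn e).+1
  end.

Definition uniform (V : finType) (E : {set {set V}}) (d : nat) : Prop :=
  forall e, e \in E -> #|e| = d.

Definition log2 (x : R) : R := (ln x / ln 2)%R.

(* Main.v *)
Require Import Defs.
From mathcomp Require Import all_boot zify.


Section Sec.
Variable V : finType.

Fixpoint tmap (x : V) (t : gt_tree V) : gt_tree V :=
  match t with
  | GTLeaf o => GTLeaf (x |: o)
  | GTNode T a b => GTNode (T :\ x) (tmap x a) (tmap x b)
  end.

Lemma test_D1 (T e : {set V}) x :
  test_outcome (T :\ x) e = test_outcome T (e :\ x).
Proof.
rewrite /test_outcome; congr (_ != _); apply/setP => y.
by rewrite !inE; case: (y \in T); case: (y == x).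
Qed.

Lemma tmap_out x t e : gt_output (tmap x t) e = x |: gt_output t (e :\ x).
Proof. by elim: t => //= T a IHa b IHb; rewrite test_D1; case: ifP. Qed.

Lemma tmap_nt x t e : gt_ntests (tmap x t) e = gt_ntests t (e :\ x).
Proof. by elim: t => //= T a IHa b IHb; rewrite test_D1 IHa IHb. Qed.

Variable F : {set {set V}}.
Variables (grp : {set V} -> option V) (c w : V -> nat) (Tm : V -> gt_tree V).
Hypothesis Hsep : forall x y : V, 0 < w x -> 0 < w y -> x != y ->
  (c x + w x + w y <= c y) || (c y + w x + w y <= c x).
Hypothesis Htest : forall e x m, e \in F -> grp e = Some x ->
  test_outcome [set y | c y < m] e = (c x < m).

Definition cand lo h := [set x | (0 < w x) && (lo <= c x < lo + 2 ^ h)].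

Fixpoint build lo h : gt_tree V :=
  if #|cand lo h| <= 1 then
    (if [pick x in cand lo h] is Some x then Tm x else GTLeaf set0)
  else match h with
       | 0 => GTLeaf set0
       | h'.+1 => GTNode [set y | c y < lo + 2 ^ h'] (build lo h') (build (lo + 2 ^ h') h')
       end.

Lemma cand_uniq lo h x y : x \in cand lo h -> y \in cand lo h -> 2 ^ h <= w x -> y = x.
Proof.
rewrite !inE => /andP[wx /andP[lx ux]] /andP[wy /andP[ly uy]] hw.
apply/eqP; apply/negPn/negP => nyx.
have := @Hsep x y wx wy; rewrite eq_sym nyx => /(_ isT) /orP[] H; lia.
Qed.

Lemma build_spec h : forall lo x e, e \in F -> grp e = Some x -> 0 < w x ->
  lo <= c x < lo + 2 ^ h -> w x < 2 ^ h.+1 ->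
  gt_output (build lo h) e = gt_output (Tm x) e /\
  2 ^ (gt_ntests (build lo h) e) * w x <= 2 ^ h.+1 * 2 ^ (gt_ntests (Tm x) e).
Proof.
have key : forall h lo x, 0 < w x -> lo <= c x < lo + 2 ^ h ->
    ~~ (#|cand lo h| <= 1) -> w x < 2 ^ h.
  move=> h0 lo x wx hx; apply: contraR; rewrite -leqNgt => hw.
  apply/card_le1_eqP => y z yin zin.
  have xin : x \in cand lo h0 by rewrite inE wx hx.
  by rewrite (@cand_uniq lo h0 x y xin yin hw) (@cand_uniq lo h0 x z xin zin hw).
elim: h => [|h IH] lo x e eF ge wx hx hw.
- rewrite /=; case: ifP => Hc.
  + have xin : x \in cand lo 0 by rewrite inE wx hx.
    case: pickP => [y yin|/(_ x)]; last by rewrite xin.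
    have -> : y = x by move/card_le1_eqP: Hc; apply.
    split => //; by rewrite mulnC leq_mul2r (ltnW hw) orbT.
  + have := key 0 lo x wx hx; rewrite Hc => /(_ isT); lia.
- rewrite /=; case: ifP => Hc.
  + have xin : x \in cand lo h.+1 by rewrite inE wx hx.
    case: pickP => [y yin|/(_ x)]; last by rewrite xin.
    have -> : y = x by move/card_le1_eqP: Hc; apply.
    split => //; by rewrite mulnC leq_mul2r (ltnW hw) orbT.
  + have hw' := key h.+1 lo x wx hx (negbT Hc).
    rewrite /= (@Htest e x _ eF ge); case: ltnP => hm.
    * have [-> H] := IH lo x e eF ge wx (ltac:(lia)) hw'.
      split => //; rewrite expnS -mulnA (expnS 2 h.+1) -mulnA leq_mul2l /=; exact: H.
    * have hx' : lo + 2 ^ h <= c x < lo + 2 ^ h + 2 ^ h by rewrite expnS in hx; lia.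
      have [-> H] := IH (lo + 2 ^ h) x e eF ge wx hx' hw'.
      split => //; rewrite expnS -mulnA (expnS 2 h.+1) -mulnA leq_mul2l /=; exact: H.
Qed.

End Sec.

Section Sec2.
Variable V : finType.
Definition idx (v : V) : nat := enum_rank v.
Lemma idx_inj : injective idx.
Proof. by move=> u v /val_inj /enum_rank_inj. Qed.

Definition gmin (e : {set V}) : option V :=
  [pick x in e | [forall y in e, idx x <= idx y]].

Lemma gminP e x : gmin e = Some x -> x \in e /\ forall y, y \in e -> idx x <= idx y.
Proof.
rewrite /gmin; case: pickP => // z /andP[ze /forallP H] [<-]; split => // y ye.
by have := H y; rewrite ye.
Qed.

Lemma gmin_ex e : e != set0 -> exists x, gmin e = Some x.
Proof.
case/set0Pn => x0 x0e.
have ex : exists n, [exists y in e, idx y == n] by exists (idx x0); apply/existsP; exists x0; rewrite x0e eqxx.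
case: (ex_minnP ex) => n /existsP[y /andP[ye /eqP yn]] Hmin.
rewrite /gmin; case: pickP => [z _|H]; first by exists z.
exfalso; have := H y; rewrite ye /=; move/negP; apply; apply/forallP => z.
apply/implyP => ze; rewrite yn; apply: Hmin; apply/existsP; exists z; by rewrite ze eqxx.
Qed.

Variable F : {set {set V}}.
Definition gi (e : {set V}) := if gmin e is Some u then idx u else 0.
Definition sF (v : V) := #|[set e in F | gi e < idx v]|.
Definition wF (v : V) := #|[set e in F | gmin e == Some v]|.
Definition cF (v : V) := 2 * sF v + wF v.

Lemma card_disj (A B C : {set {set V}}) : [disjoint A & B] -> A :|: B \subset C -> #|A| + #|B| <= #|C|.
Proof.
move=> dAB sub; rewrite -cardsUI.
have -> : A :&: B = set0 by apply/eqP; rewrite -setI_eq0 in dAB.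
by rewrite cards0 addn0 subset_leq_card.
Qed.

Lemma sw_le u v : idx u < idx v -> sF u + wF u <= sF v.
Proof.
move=> huv; apply: card_disj.
- rewrite -setI_eq0; apply/eqP/setP => e; rewrite !inE.
  apply/negP => /andP[/andP[_ h1] /andP[_ /eqP h2]]; move: h1; rewrite /gi h2; lia.
- apply/subsetP => e; rewrite !inE => /orP[/andP[-> h]|/andP[-> /eqP h]] /=.
  + lia.
  + by rewrite /gi h.
Qed.

Lemma sw_leF u : sF u + wF u <= #|F|.
Proof.
apply: card_disj.
- rewrite -setI_eq0; apply/eqP/setP => e; rewrite !inE.
  apply/negP => /andP[/andP[_ h1] /andP[_ /eqP h2]]; move: h1; rewrite /gi h2; lia.
- by apply/subsetP => e; rewrite !inE => /orP[/andP[-> _]|/andP[-> _]].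
Qed.

Lemma c_mono u v : idx u <= idx v -> cF u <= cF v.
Proof.
rewrite leq_eqVlt => /orP[/eqP/idx_inj -> //|h].
have := @sw_le u v h; rewrite /cF; lia.
Qed.

Lemma Hsep2 x y : 0 < wF x -> 0 < wF y -> x != y ->
  (cF x + wF x + wF y <= cF y) || (cF y + wF x + wF y <= cF x).
Proof.
move=> _ _ nxy; have : idx x != idx y by apply: contra nxy => /eqP/idx_inj ->.
rewrite neq_ltn => /orP[h|h]; [have := @sw_le x y h|have := @sw_le y x h]; rewrite /cF => H; apply/orP; [left|right]; lia.
Qed.

Lemma Htest2 e x m : e \in F -> gmin e = Some x ->
  test_outcome [set y | cF y < m] e = (cF x < m).
Proof.
move=> _ /gminP [xe Hx]; rewrite /test_outcome.
apply/idP/idP.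
- case/set0Pn => y; rewrite !inE => /andP[hy ye].
  exact: leq_ltn_trans (@c_mono x y (Hx y ye)) hy.
- move=> hx; apply/set0Pn; exists x; by rewrite !inE hx xe.
Qed.
End Sec2.
Arguments gmin {V}. Arguments wF {V}. Arguments cF {V}. Arguments sF {V}. Arguments gi {V}.
Arguments build {V}. Arguments tmap {V}.
Arguments gminP {V e x}. Arguments gmin_ex {V e}. Arguments tmap_out {V}. Arguments tmap_nt {V}.

Lemma mainP (V : finType) k : forall F : {set {set V}}, (forall e, e \in F -> #|e| = k) ->
  exists t, forall e, e \in F -> gt_output t e = e /\ 2 ^ gt_ntests t e <= #|F| * 8 ^ k.
Proof.
elim: k => [|k IH] F HF.
  exists (GTLeaf set0) => e eF; split.
    by apply/esym/eqP; rewrite -cards_eq0 HF.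
  rewrite /= expn0 muln1; apply/card_gt0P; by exists e.
pose G x := [set e :\ x | e in [set e in F | gmin e == Some x]].
have HT : forall x, exists t, forall e', e' \in G x -> gt_output t e' = e' /\
    2 ^ gt_ntests t e' <= #|G x| * 8 ^ k.
  move=> x; apply: IH => e' /imsetP[e]; rewrite inE => /andP[eF /eqP ge] ->.
  have [xe _] := gminP ge; have := cardsD1 x e; rewrite xe HF //; lia.
have [T HTT] := fin_all_exists HT.
have cardG x : #|G x| = wF F x.
  rewrite card_in_imset // => e1 e2; rewrite !inE => /andP[_ /eqP g1] /andP[_ /eqP g2] h.
  have [x1 _] := gminP g1; have [x2 _] := gminP g2.
  by rewrite -(setD1K x1) h setD1K.
set W := #|F|.
case: (posnP W) => [W0|Wpos].
  exists (GTLeaf set0) => e eF; exfalso.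
  by move: W0 => /eqP; rewrite cards_eq0 => /eqP FF; rewrite FF inE in eF.
pose t0 := trunc_log 2 (2 * W).
have /andP[lb ub] := @trunc_log_bounds 2 (2 * W) isT (ltac:(lia)).
rewrite -/t0 in lb ub.
pose Tm x := tmap x (T x).
exists (build (cF F) (wF F) Tm 0 t0.+1) => e eF.
have [x ge] : exists x, gmin e = Some x.
  apply: gmin_ex; rewrite -cards_eq0 HF //.
have [xe _] := gminP ge.
have wx : 0 < wF F x by apply/card_gt0P; exists e; rewrite !inE eF ge eqxx.
have hsw := @sw_leF V F x.
have [Ho Hn] := @build_spec V F gmin (cF F) (wF F) Tm (@Hsep2 V F) (@Htest2 V F)
  t0.+1 0 x e eF ge wx (ltac:(rewrite /cF -/W in hsw *; lia)) (ltac:(rewrite -/W in hsw; rewrite expnS; lia)).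
have ee : e :\ x \in G x by apply/imsetP; exists e => //; rewrite !inE eF ge eqxx.
have [Ho2 Hn2] := HTT x _ ee.
split.
  by rewrite Ho /Tm tmap_out Ho2 setD1K.
rewrite /Tm tmap_nt in Hn.
rewrite cardG in Hn2.
set N := gt_ntests _ e in Hn *.
set M := gt_ntests _ _ in Hn Hn2.
set w := wF F x in Hn Hn2 wx.
have h1 : 2 ^ t0.+2 <= 8 * W by rewrite !expnS; lia.
have : 2 ^ N * w <= (W * 8 ^ k.+1) * w.
  apply: leq_trans Hn _.
  apply: leq_trans (leq_mul h1 Hn2) _.
  by rewrite expnS; lia.
by rewrite leq_pmul2r.
Qed.
From Stdlib Require Import Reals Lra.

Lemma INR_expn (a n : nat) : INR (expn a n) = (INR a ^ n)%R.
Proof. elim: n => [|n IH]; first by rewrite expn0. by rewrite expnS mult_INR IH. Qed.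

Lemma ln_le' x y : (0 < x)%R -> (x <= y)%R -> (ln x <= ln y)%R.
Proof. move=> hx [h|->]; [left; exact: ln_increasing | right; reflexivity]. Qed.

Theorem theorem1 :
  exists C : R, (0 < C)%R /\
  forall (d : nat) (V : finType) (E : {set {set V}}),
    (1 <= d)%N -> uniform E d -> (1 <= #|E|)%N ->
    exists t : gt_tree V,
      forall e, e \in E ->
        gt_output t e = e /\
        (INR (gt_ntests t e) <=
           log2 (INR #|E|) + 2 * sqrt (INR d * log2 (INR #|E|)) + C * INR d)%R.
Proof.
exists 3%R; split; first lra.
move=> d V E _ Hu HE.
have [t Ht] := @mainP V d E Hu.
exists t => e eE; have [Ho Hn] := Ht e eE; split => //.
set n := gt_ntests t e in Hn *.
have hsq := sqrt_pos (INR d * log2 (INR #|E|)).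
have l2 : (0 < ln 2)%R by apply: (Rlt_trans _ (/ 2)); [lra | exact: ln_lt_2].
have E0 : (0 < INR #|E|)%R by apply: lt_0_INR; apply/ltP.
have h1 : (INR (expn 2 n) <= INR (#|E| * expn 8 d))%R by apply: le_INR; apply/leP.
rewrite INR_expn mult_INR INR_expn in h1.
have i2 : (0 < INR 2)%R by apply: lt_0_INR; apply/ltP.
have i8 : (0 < INR 8)%R by apply: lt_0_INR; apply/ltP.
have h2 := @ln_le' _ _ (pow_lt _ n i2) h1.
rewrite ln_pow // in h2.
rewrite ln_mult // in h2; last by apply: pow_lt.
rewrite ln_pow // in h2.
have l8 : ln (INR 8) = (3 * ln 2)%R.
  have -> : INR 8 = (2 ^ 3)%R by simpl; lra.
  by rewrite ln_pow; [simpl; lra | lra].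
rewrite l8 in h2.
have h3 : (INR n <= ln (INR #|E|) / ln 2 + 3 * INR d)%R.
  apply: (Rmult_le_reg_r (ln 2)) => //.
  rewrite Rmult_plus_distr_r /Rdiv Rmult_assoc Rinv_l; last lra.
  have : (INR 2 = 2)%R by simpl; lra.
  move=> e2; rewrite e2 in h2; lra.
rewrite /log2 in hsq *; set L := (ln (INR #|E|) / ln 2)%R in h3 hsq *; lra.
Qed.
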